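(* If a deterministic KAT automaton is $k$-dense, then it has at least $k$ states.
   Context: Atoms $\mathsf{At}_T=2^T$. Deterministic KAT automaton over $(\Sigma,T)$: $A=(Q,\delta,\iota)$, $Q$ finite set of states, $\delta:Q\times\mathsf{At}_T\to\{\mathsf{accept},\mathsf{reject}\}+\Sigma\times Q$, $\iota:\mathsf{At}_T\to\{\mathsf{accept},\mathsf{reject}\}+\Sigma\times Q$. Write $q\xrightarrow{\alpha\mid p}_Aq'$ for $\delta(q,\alpha)=(p,q')$; $q$ accepts $\alpha$ if $\delta(q,\alpha)=\mathsf{accept}$. $A$ is $k$-dense if there exist non-empty subsets $S_1,\dots,S_k\subseteq Q$, distinct atoms $\alpha_1,\dots,\alpha_k\in\mathsf{At}_T$ and, for all $1\le i,j\le k$ and $q\in S_i$, an action $p_{qj}\in\Sigma$, such that for all $i,j,m\le k$: (1) if $q\in S_i$ then $q$ accepts $\alpha_i$; (2) if $i\ne j$ and $q\in S_i$, there is $q'\in S_j$ with $q\xrightarrow{\alpha_j\mid p_{qj}}_Aq'$; (3) if $q\in S_i$ and $q'\in S_j$ with $p_{qm}=p_{q'm}$, then $i=j$. *)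

(* Defs.v *)
From mathcomp Require Import all_boot.
Set Implicit Arguments. Unset Strict Implicit. Unset Printing Implicit Defensive.

(* Atoms At_T = 2^T, represented as {set T} for a finite set T of primitive tests. *)
Definition atom (T : finType) := {set T}.

Inductive kat_out (Sigma Q : Type) :=
| Accept
| Reject
| Step of Sigma & Q.
Arguments Accept {Sigma Q}.
Arguments Reject {Sigma Q}.

Record kat_automaton (Sigma : Type) (T : finType) := KatAutomaton {
  kstate : finType;
  kdelta : kstate -> atom T -> kat_out Sigma kstate;
  kiota  : atom T -> kat_out Sigma kstate
}.

(* k-density, transcribed literally.  Indices 1..k are 'I_k; p_{qj} is given
   by a function p : 'I_k -> Q -> 'I_k -> Sigma, p i q j being meaningful for q \in S_i. *)
Definition k_dense (Sigma : Type) (T : finType) (A : kat_automaton Sigma T) (k : nat) : Prop :=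
  exists (S : 'I_k -> {set kstate A}) (alpha : 'I_k -> atom T)
         (p : 'I_k -> kstate A -> 'I_k -> Sigma),
    (forall i, S i != set0) /\
    injective alpha /\
    (forall i q, q \in S i -> kdelta q (alpha i) = Accept) /\
    (forall i j q, i != j -> q \in S i ->
        exists2 q', q' \in S j & kdelta q (alpha j) = Step (p i q j) q') /\
    (forall i j m q q', q \in S i -> q' \in S j -> p i q m = p j q' m -> i = j).

(* Main.v *)
Require Import Defs.
From mathcomp Require Import all_boot.

Theorem lemma6p18 (Sigma : Type) (T : finType) (A : kat_automaton Sigma T) (k : nat) :
  k_dense A k -> k <= #|kstate A|.
Proof.
case: k => [//|k].
move=> [S [alpha [p [Hne [Hinj [Hacc [Hstep _]]]]]]].
have [q0 _] := set0Pn _ (Hne ord0).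
pose f i := odflt q0 [pick x in S i].
have fS i : f i \in S i.
  rewrite /f; case: pickP => //= H.
  by have [x Hx] := set0Pn _ (Hne i); move: (H x); rewrite Hx.
have finj : injective f.
  move=> i j Hij; apply/eqP; apply/negPn/negP => Hn.
  have [q' _ Hd] := Hstep i j (f i) Hn (fS i).
  by move: (Hacc j (f j) (fS j)); rewrite -Hij Hd.
by rewrite -{1}(card_ord k.+1); apply: leq_card finj.
Qed.
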